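(* Let $\mathcal{H}$ be a finite-dimensional Hilbert space, $\{\rho_\theta;\theta\in\Theta\subset\mathbb{R}^d\}$ a smooth family of density operators, $\theta_0\in\Theta$ with $\rho=\rho_{\theta_0}$ strictly positive, and suppose the SLD tangent space at $\theta_0$ has a $\mathcal{D}_\rho$ invariant extension. Then for every $d\times d$ real positive matrix $G$ and every $\beta\in[0,1]$, $$C^{(H)}_{\theta_0,G}\ \ge\ C^{(\beta)}_{\theta_0,G}.$$
   Context: $\partial_i\rho=\frac{\partial}{\partial\theta^i}\rho_\theta|_{\theta=\theta_0}$. SLDs $L_i^{(S)}$: Hermitian with $\partial_i\rho=\frac12(\rho L_i^{(S)}+L_i^{(S)}\rho)$, assumed linearly independent; SLD tangent space $\mathcal{T}=\operatorname{span}_{\mathbb{R}}\{L_i^{(S)}\}$. Commutation operator: $\mathcal{D}_\rho(X)\rho+\rho\mathcal{D}_\rho(X)=\sqrt{-1}(X\rho-\rho X)$; a $\mathcal{D}_\rho$ invariant extension of $\mathcal{T}$ is a real subspace of Hermitian operators containing $\mathcal{T}$ and mapped into itself by $\mathcal{D}_\rho$. For $\beta\in[0,1]$, $L_i^{(\beta)}$ is defined by $\partial_i\rho=\frac{1+\beta}{2}\rho L_i^{(\beta)}+\frac{1-\beta}{2}L_i^{(\beta)}\rho$, $J^{(\beta)}_{\theta_0}=[\operatorname{Tr}\partial_i\rho\,L_j^{(\beta)}]_{ij}$, and $C^{(\beta)}_{\theta_0,G}=\operatorname{Tr}G(J^{(\beta)}_{\theta_0})^{-1}+\operatorname{Tr}|\sqrt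 G\,\operatorname{Im}(J^{(\beta)}_{\theta_0})^{-1}\sqrt G|$. Holevo bound: $C^{(H)}_{\theta_0,G}=\min_B\{\operatorname{Tr}GZ(B)+\operatorname{Tr}|\sqrt G\operatorname{Im}Z(B)\sqrt G|\}$ over Hermitian $B_1,\dots,B_d$ with $\operatorname{Tr}\partial_i\rho\,B_j=\delta_{ij}$, $Z_{ij}(B)=\operatorname{Tr}\rho B_jB_i$. Im entrywise; $|X|=(X^*X)^{1/2}$. *)

(* Defs.v *)
(* finite-dimensional quantum estimation, over an arbitrary
   numClosedFieldType C (e.g. algC); operators on H = C^n are 'M[C]_n. *)
From Stdlib Require Import ClassicalEpsilon.
From HB Require Import structures.
From mathcomp Require Import all_boot all_order all_algebra.
Set Implicit Arguments. Unset Strict Implicit. Unset Printing Implicit Defensive.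
Import Order.TTheory GRing.Theory Num.Theory.
Local Open Scope ring_scope.

Section QDefs.
Variable C : numClosedFieldType.

Definition adj m p (A : 'M[C]_(m, p)) : 'M[C]_(p, m) := (map_mx Num.conj A)^T.

Definition herm n (A : 'M[C]_n) : Prop := adj A = A.

Definition psd n (A : 'M[C]_n) : Prop :=
  herm A /\ forall v : 'cV[C]_n, 0 <= (adj v *m A *m v) 0 0.

Definition posdef n (A : 'M[C]_n) : Prop :=
  herm A /\ forall v : 'cV[C]_n, v != 0 -> 0 < (adj v *m A *m v) 0 0.

Definition psd_sqrt n (A : 'M[C]_n) : 'M[C]_n :=
  epsilon (inhabits 0) (fun S => psd S /\ S *m S = A).

Definition trabs n (X : 'M[C]_n) : C := \tr (psd_sqrt (adj X *m X)).

Definition Im_mx m p (A : 'M[C]_(m, p)) : 'M[C]_(m, p) := map_mx (fun z => 'Im z) A.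

Definition is_SLD n (rho D L : 'M[C]_n) : Prop :=
  herm L /\ D = 2^-1 *: (rho *m L + L *m rho).

Definition is_Lbeta n (beta : C) (rho D L : 'M[C]_n) : Prop :=
  D = ((1 + beta) / 2) *: (rho *m L) + ((1 - beta) / 2) *: (L *m rho).

Definition real_lin_indep n d (L : 'I_d -> 'M[C]_n) : Prop :=
  forall c : 'I_d -> C, (forall i, c i \is Num.real) ->
    \sum_i c i *: L i = 0 -> forall i, c i = 0.

Definition SLD_tangent n d (L : 'I_d -> 'M[C]_n) (X : 'M[C]_n) : Prop :=
  exists c : 'I_d -> C, (forall i, c i \is Num.real) /\ X = \sum_i c i *: L i.

(* Y = D_ρ(X) :  Y ρ + ρ Y = sqrt(-1) (X ρ - ρ X) *)
Definition commD n (rho X Y : 'M[C]_n) : Prop :=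
  Y *m rho + rho *m Y = 'i *: (X *m rho - rho *m X).

Definition real_subspace n (V : 'M[C]_n -> Prop) : Prop :=
  [/\ V 0,
      forall X Y, V X -> V Y -> V (X + Y)
    & forall (a : C) X, a \is Num.real -> V X -> V (a *: X)].

Definition Dinv_extension n d (rho : 'M[C]_n) (L : 'I_d -> 'M[C]_n)
    (V : 'M[C]_n -> Prop) : Prop :=
  [/\ real_subspace V,
      forall X, V X -> herm X,
      forall X, SLD_tangent L X -> V X
    & forall X Y, V X -> commD rho X Y -> V Y].

Definition Jmat n d (D Lb : 'I_d -> 'M[C]_n) : 'M[C]_d :=
  \matrix_(i, j) \tr (D i *m Lb j).

Definition Cbeta d (G J : 'M[C]_d) : C :=
  \tr (G *m invmx J)
  + trabs (psd_sqrt G *m Im_mx (invmx J) *m psd_sqrt G).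

Definition holevo_feasible n d (D B : 'I_d -> 'M[C]_n) : Prop :=
  (forall j, herm (B j)) /\ (forall i j, \tr (D i *m B j) = (i == j)%:R).

Definition Zmat n d (rho : 'M[C]_n) (B : 'I_d -> 'M[C]_n) : 'M[C]_d :=
  \matrix_(i, j) \tr (rho *m B j *m B i).

Definition holevo_fun n d (G : 'M[C]_d) (rho : 'M[C]_n) (B : 'I_d -> 'M[C]_n) : C :=
  \tr (G *m Zmat rho B)
  + trabs (psd_sqrt G *m Im_mx (Zmat rho B) *m psd_sqrt G).

End QDefs.

(* Main.v *)
Require Import Defs.
From HB Require Import structures.
From Stdlib Require Import ClassicalEpsilon.
From mathcomp Require Import all_boot all_order all_algebra spectral.
From mathcomp Require Import ring.
Import Order.TTheory GRing.Theory Num.Theory.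
Local Open Scope ring_scope.

Set Implicit Arguments. Unset Strict Implicit. Unset Printing Implicit Defensive.


Section Aux.
Variable C : numClosedFieldType.

Lemma cadjE m p (A : 'M[C]_(m, p)) i j : adj A i j = (A j i)^*.
Proof. by rewrite /adj !mxE. Qed.

Lemma cadjK m p (A : 'M[C]_(m, p)) : adj (adj A) = A.
Proof. by apply/matrixP => i j; rewrite !cadjE conjCK. Qed.

Lemma cadj_mul m p q (A : 'M[C]_(m, p)) (B : 'M[C]_(p, q)) :
  adj (A *m B) = adj B *m adj A.
Proof. by rewrite /adj map_mxM trmx_mul. Qed.

Lemma cadjD m p (A B : 'M[C]_(m, p)) : adj (A + B) = adj A + adj B.
Proof. by apply/matrixP => i j; rewrite !mxE rmorphD. Qed.

Lemma cadjN m p (A : 'M[C]_(m, p)) : adj (- A) = - adj A.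
Proof. by apply/matrixP => i j; rewrite !mxE rmorphN. Qed.

Lemma cadjB m p (A B : 'M[C]_(m, p)) : adj (A - B) = adj A - adj B.
Proof. by rewrite cadjD cadjN. Qed.

Lemma cadjZ m p a (A : 'M[C]_(m, p)) : adj (a *: A) = a^* *: adj A.
Proof. by apply/matrixP => i j; rewrite !mxE rmorphM. Qed.

Lemma cadj0 m p : adj (0 : 'M[C]_(m, p)) = 0.
Proof. by apply/matrixP => i j; rewrite !mxE rmorph0. Qed.

Lemma cadj1 m : adj (1%:M : 'M[C]_m) = 1%:M.
Proof. by apply/matrixP => i j; rewrite cadjE !mxE eq_sym rmorph_nat. Qed.

Lemma cadj_sum m p (I : finType) (F : I -> 'M[C]_(m, p)) :
  adj (\sum_i F i) = \sum_i adj (F i).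
Proof.
apply/matrixP => i j; rewrite cadjE !summxE rmorph_sum.
by apply: eq_bigr => k _; rewrite cadjE.
Qed.

Lemma cadj_tr m (A : 'M[C]_m) : adj (A^T) = (adj A)^T.
Proof. by apply/matrixP => i j; rewrite !mxE. Qed.

Lemma tr_cadj m (A : 'M[C]_m) : \tr (adj A) = (\tr A)^*.
Proof. by rewrite /mxtrace rmorph_sum; apply: eq_bigr => i _; rewrite cadjE. Qed.

Lemma cadj_diag m (d : 'rV[C]_m) : adj (diag_mx d) = diag_mx (map_mx Num.conj d).
Proof.
apply/matrixP => i j; rewrite cadjE !mxE rmorphMn eq_sym.
by case: eqP => // ->.
Qed.

Lemma cadj_inv m (A : 'M[C]_m) : adj (invmx A) = invmx (adj A).
Proof. by rewrite /adj map_invmx trmx_inv. Qed.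

Lemma bqfE m (c e : 'cV[C]_m) (M : 'M[C]_m) :
  (adj c *m M *m e) 0 0 = \sum_i \sum_j (c i 0)^* * M i j * e j 0.
Proof.
rewrite mxE (exchange_big). apply: eq_bigr => j _; rewrite !mxE big_distrl /=.
by apply: eq_bigr => i _; rewrite cadjE.
Qed.

Lemma normvE m (w : 'cV[C]_m) : (adj w *m w) 0 0 = \sum_i `|w i 0| ^+ 2.
Proof. by rewrite mxE; apply: eq_bigr => i _; rewrite cadjE normCK mulrC. Qed.

Lemma normv_ge0 m (w : 'cV[C]_m) : 0 <= (adj w *m w) 0 0.
Proof. by rewrite normvE; apply: sumr_ge0 => i _; rewrite exprn_ge0. Qed.

Lemma normv_eq0 m (w : 'cV[C]_m) : (adj w *m w) 0 0 = 0 -> w = 0.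
Proof.
rewrite normvE => /psumr_eq0P H; apply/matrixP => i j.
rewrite ord1 mxE.
have Hi : `|w i 0| ^+ 2 = 0 by apply: H => // k _; exact: exprn_ge0.
by move/eqP: Hi; rewrite sqrf_eq0 normr_eq0 => /eqP.
Qed.

Lemma mulmx_kk m p (M : 'M[C]_(m, p)) (A : 'M[C]_p) (N : 'M[C]_(p, m)) k :
  (M *m A *m N) k k = (row k M *m A *m col k N) 0 0.
Proof.
rewrite !mxE; apply: eq_bigr => j _; rewrite !mxE; congr (_ * _).
by apply: eq_bigr => i _; rewrite !mxE.
Qed.

Lemma row_adj m p (M : 'M[C]_(m, p)) k : row k M = adj (col k (adj M)).
Proof. by apply/matrixP => i j; rewrite !mxE conjCK. Qed.

Lemma psd_kk m p (A : 'M[C]_p) (M : 'M[C]_(m, p)) k :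
  psd A -> 0 <= (M *m A *m adj M) k k.
Proof. by move=> [_ HA]; rewrite mulmx_kk row_adj. Qed.

Lemma psd_adjmul m p (X : 'M[C]_(m, p)) : psd (adj X *m X).
Proof.
split; first by rewrite /herm cadj_mul cadjK.
by move=> v; rewrite mulmxA -cadj_mul -mulmxA normv_ge0.
Qed.

Lemma psd_conj m (A : 'M[C]_m) (g : 'M[C]_m) : psd A -> herm g -> psd (g *m A *m g).
Proof.
move=> [hA qA] hg; split.
  by rewrite /herm !cadj_mul hA hg mulmxA.
move=> v; have := qA (g *m v).
by rewrite cadj_mul hg !mulmxA.
Qed.

Lemma psd_tr m (A : 'M[C]_m) : psd A -> psd A^T.
Proof.
move=> [hA qA]; split; first by rewrite /herm cadj_tr hA.
move=> v; have := qA ((adj v)^T).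
suff -> : (adj (adj v)^T *m A *m (adj v)^T) 0 0 = (adj v *m A^T *m v) 0 0 by [].
rewrite !bqfE; rewrite exchange_big; apply: eq_bigr => i _; apply: eq_bigr => j _.
by rewrite !mxE conjCK; ring.
Qed.

End Aux.


Section Spec.
Variable C : numClosedFieldType.

Definition sp n (P : 'M[C]_n) (d : 'rV[C]_n) := adj P *m diag_mx d *m P.

Lemma herm_spec n (A : 'M[C]_n) : herm A -> exists P : 'M[C]_n, exists s : 'rV[C]_n,
  [/\ P *m adj P = 1%:M, adj P *m P = 1%:M, forall k, s 0 k \is Num.real & A = sp P s].
Proof.
move=> hA.
have nA : A \is normalmx.
  apply/normalmxP; rewrite -map_trmx.
  by change (A *m adj A = adj A *m A); rewrite hA.
have /orthomx_spectralP eqA := nA.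
set P := spectralmx A in eqA; set s := spectral_diag A in eqA.
have uP : P \is unitarymx by exact: spectral_unitarymx.
have hP1 : P *m adj P = 1%:M.
  by move/unitarymxP: uP; rewrite -map_trmx.
have iP : invmx P = adj P by rewrite invmx_unitary // -map_trmx.
have hP2 : adj P *m P = 1%:M by rewrite -iP mulVmx // spectral_unit.
exists P, s; split => //; last by rewrite /sp -iP.
have Ed : diag_mx s = P *m A *m adj P.
  by rewrite eqA iP !mulmxA hP1 mul1mx -mulmxA hP1 mulmx1.
have : adj (diag_mx s) = diag_mx s by rewrite Ed !cadj_mul cadjK hA mulmxA.
move=> /matrixP H k; move: (H k k); rewrite cadj_diag !mxE eqxx !mulr1n.
by move/CrealP.
Qed.

Section SP.
Variables (n : nat) (P : 'M[C]_n).
Hypotheses (hP1 : P *m adj P = 1%:M) (hP2 : adj P *m P = 1%:M).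

Lemma sp_mul (d e : 'rV[C]_n) : sp P d *m sp P e = sp P (\row_k (d 0 k * e 0 k)).
Proof.
rewrite /sp !mulmxA -[adj P *m _ *m P *m adj P]mulmxA hP1 mulmx1.
by rewrite -[adj P *m _ *m _]mulmxA mulmx_diag.
Qed.

Lemma sp_tr (d : 'rV[C]_n) : \tr (sp P d) = \sum_k d 0 k.
Proof. by rewrite /sp mxtrace_mulC mulmxA hP1 mul1mx mxtrace_diag. Qed.

Lemma sp_add (d e : 'rV[C]_n) : sp P (d + e) = sp P d + sp P e.
Proof. by rewrite /sp linearD /= mulmxDr mulmxDl. Qed.

Lemma sp_sub (d e : 'rV[C]_n) : sp P (d - e) = sp P d - sp P e.
Proof. by rewrite /sp linearB /= mulmxBr mulmxBl. Qed.

Lemma sp_one : sp P (const_mx 1 : 'rV[C]_n) = 1%:M.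
Proof. by rewrite /sp diag_const_mx mul_mx_scalar scale1r hP2. Qed.

Lemma sp_herm (d : 'rV[C]_n) : (forall k, d 0 k \is Num.real) -> herm (sp P d).
Proof.
move=> rd; rewrite /herm /sp !cadj_mul cadjK cadj_diag mulmxA.
congr (_ *m diag_mx _ *m _); apply/matrixP => i k; rewrite ord1 !mxE.
exact/CrealP.
Qed.

Lemma sp_psd (d : 'rV[C]_n) : (forall k, 0 <= d 0 k) -> psd (sp P d).
Proof.
move=> pd; split.
  by apply: sp_herm => k; apply: ger0_real.
move=> v; rewrite /sp !mulmxA -cadj_mul -!mulmxA mulmxA.
set w := P *m v.
rewrite bqfE; apply: sumr_ge0 => i _; apply: sumr_ge0 => j _.
rewrite [diag_mx d i j]mxE; have [<-|ne] := eqVneq i j; last first.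
  by rewrite mulr0n mulr0 mul0r.
by rewrite ?eqxx mulr1n mulrAC [(w i 0)^* * _]mulrC -normCK mulr_ge0 ?exprn_ge0.
Qed.

End SP.

Lemma tr_psd_mul n (A Q : 'M[C]_n) : psd A -> psd Q -> 0 <= \tr (A *m Q).
Proof.
move=> pA pQ; have [P [s [hP1 hP2 _ eA]]] := herm_spec pA.1.
have ds : diag_mx s = P *m A *m adj P.
  by rewrite eA /sp !mulmxA hP1 mul1mx -mulmxA hP1 mulmx1.
have -> : \tr (A *m Q) = \tr (diag_mx s *m (P *m Q *m adj P)).
  by rewrite eA /sp -!mulmxA mxtrace_mulC !mulmxA.
rewrite mul_diag_mx /mxtrace; apply: sumr_ge0 => k _; rewrite mxE.
have : 0 <= (diag_mx s) k k by rewrite ds; apply: psd_kk.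
rewrite mxE eqxx mulr1n => sk; apply: mulr_ge0 => //.
exact: psd_kk.
Qed.

End Spec.


Section Sqrt.
Variable C : numClosedFieldType.

Lemma colM m p q (A : 'M[C]_(m, p)) (B : 'M[C]_(p, q)) k :
  A *m col k B = col k (A *m B).
Proof. by apply/matrixP => i j; rewrite !mxE; apply: eq_bigr => l _; rewrite !mxE. Qed.

Lemma psd_diag_ge0 n (A P : 'M[C]_n) (s : 'rV[C]_n) :
  P *m adj P = 1%:M -> psd A -> A = sp P s -> forall k, 0 <= s 0 k.
Proof.
move=> hP1 pA eA k.
have ds : diag_mx s = P *m A *m adj P.
  by rewrite eA /sp !mulmxA hP1 mul1mx -mulmxA hP1 mulmx1.
have : 0 <= (diag_mx s) k k by rewrite ds; apply: psd_kk.
by rewrite mxE eqxx mulr1n.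
Qed.

Lemma psd_sqrt_spec n (A : 'M[C]_n) :
  psd A -> psd (psd_sqrt A) /\ psd_sqrt A *m psd_sqrt A = A.
Proof.
move=> pA; rewrite /psd_sqrt; apply: (epsilon_spec _ (fun S : 'M[C]_n => psd S /\ S *m S = A)).
have [P [s [hP1 hP2 rs eA]]] := herm_spec pA.1.
have sk := psd_diag_ge0 hP1 pA eA.
exists (sp P (map_mx sqrtC s)); split.
  by apply: sp_psd => // k; rewrite mxE sqrtC_ge0.
rewrite sp_mul // eA; congr (sp P _); apply/matrixP => i k.
by rewrite ord1 !mxE -expr2 sqrtCK.
Qed.

Lemma psd_sq_uniq n (S P : 'M[C]_n) (t : 'rV[C]_n) :
  P *m adj P = 1%:M -> adj P *m P = 1%:M -> (forall k, 0 <= t 0 k) ->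
  psd S -> S *m S = sp P t *m sp P t -> S = sp P t.
Proof.
move=> hP1 hP2 tk pS SS.
set T := sp P t in SS *.
have TU : T *m adj P = adj P *m diag_mx t by rewrite /T /sp -mulmxA hP1 mulmx1.
suff SU : S *m adj P = adj P *m diag_mx t.
  by rewrite /T /sp -SU -mulmxA hP2 mulmx1.
apply/matrixP => i k.
set v := col k (adj P).
have Tv : T *m v = t 0 k *: v.
  rewrite /v colM TU mul_mx_diag; apply/matrixP => a b.
  by rewrite !mxE mulrC.
have Sv : S *m v = t 0 k *: v.
  set w := S *m v - t 0 k *: v.
  have Sw : S *m w = - (t 0 k *: w).
    rewrite /w mulmxBr -scalemxAr mulmxA SS -mulmxA Tv -scalemxAr Tv.
    by rewrite scalerBr opprB !scalerA.
  have w0 : w = 0.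
    have [t0|tpos] := eqVneq (t 0 k) 0.
      apply: normv_eq0.
      have -> : adj w = adj v *m S.
        by rewrite /w t0 scale0r subr0 cadj_mul pS.1.
      by rewrite -mulmxA Sw t0 scale0r oppr0 mulmx0 mxE.
    apply: normv_eq0; apply/eqP; rewrite eq_le normv_ge0 andbT.
    have tp : 0 < t 0 k by rewrite lt_def tpos tk.
    have := pS.2 w; rewrite -mulmxA Sw mulmxN -scalemxAr.
    set M := adj w *m w; rewrite !mxE.
    by rewrite oppr_ge0 pmulr_rle0.
  by move: w0 => /eqP; rewrite subr_eq0 => /eqP.
have := congr1 (fun M : 'cV[C]_n => M i 0) Sv.
rewrite /v colM mul_mx_diag !mxE => ->.
by rewrite mulrC.
Qed.

Lemma trabs_spec n (X H P : 'M[C]_n) (s : 'rV[C]_n) :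
  P *m adj P = 1%:M -> adj P *m P = 1%:M -> (forall k, s 0 k \is Num.real) ->
  H = sp P s -> adj X *m X = H *m H -> trabs X = \sum_k `|s 0 k|.
Proof.
move=> hP1 hP2 rs eH XX.
have [pS SS] := psd_sqrt_spec (psd_adjmul X).
rewrite /trabs.
have -> : psd_sqrt (adj X *m X) = sp P (map_mx (@Num.norm C C) s).
  apply: psd_sq_uniq => //; first by move=> k; rewrite mxE normr_ge0.
  rewrite SS XX eH !sp_mul //; congr (sp P _); apply/matrixP => i k.
  by rewrite !mxE -!expr2 real_normK.
by rewrite sp_tr //; apply: eq_bigr => k _; rewrite mxE.
Qed.

End Sqrt.


Section Gram.
Variable C : numClosedFieldType.
Variables (n : nat) (rho : 'M[C]_n) (a b : C).
Hypotheses (hrho : posdef rho) (ha : 0 < a) (hb : 0 <= b).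

Lemma entryB m p (A B : 'M[C]_(m, p)) i j : (A - B) i j = A i j - B i j.
Proof. by rewrite !mxE. Qed.

Lemma tr_sum (I : finType) (F : I -> 'M[C]_n) : \tr (\sum_i F i) = \sum_i \tr (F i).
Proof. exact: raddf_sum. Qed.

Definition Wf (X : 'M[C]_n) := a *: (adj X *m rho) + b *: (rho *m adj X).
Definition fb (X Y : 'M[C]_n) := \tr (Wf X *m Y).

Lemma rho_herm : herm rho. Proof. exact: hrho.1. Qed.
Lemma rho_psd : psd rho.
Proof.
split; first exact: rho_herm.
move=> v; have [->|nz] := eqVneq v 0; last exact: ltW (hrho.2 v nz).
by rewrite mulmx0 mxE.
Qed.
Lemma ar : a^* = a. Proof. by apply/CrealP; apply: gtr0_real. Qed.
Lemma br : b^* = b. Proof. by apply/CrealP; apply: ger0_real. Qed.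

Lemma WfB X Y : Wf (X - Y) = Wf X - Wf Y.
Proof.
rewrite /Wf cadjB mulmxBl mulmxBr !scalerBr.
by rewrite addrACA opprD.
Qed.

Lemma fb_subl X Y Z : fb (X - Y) Z = fb X Z - fb Y Z.
Proof. by rewrite /fb WfB mulmxBl raddfB. Qed.

Lemma fb_subr X Y Z : fb X (Y - Z) = fb X Y - fb X Z.
Proof. by rewrite /fb mulmxBr raddfB. Qed.

Lemma fb_sumr d X (e : 'I_d -> C) (Y : 'I_d -> 'M[C]_n) :
  fb X (\sum_j e j *: Y j) = \sum_j e j * fb X (Y j).
Proof.
rewrite /fb mulmx_sumr tr_sum; apply: eq_bigr => j _.
by rewrite -scalemxAr mxtraceZ.
Qed.

Lemma Wf_sum d (c : 'I_d -> C) (X : 'I_d -> 'M[C]_n) :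
  Wf (\sum_i c i *: X i) = \sum_i (c i)^* *: Wf (X i).
Proof.
rewrite /Wf cadj_sum mulmx_suml mulmx_sumr !scaler_sumr -big_split /=.
apply: eq_bigr => i _; rewrite cadjZ -scalemxAl -scalemxAr !scalerA scalerDr !scalerA.
by rewrite [a * _]mulrC [b * _]mulrC.
Qed.

Lemma fb_suml d (c : 'I_d -> C) (X : 'I_d -> 'M[C]_n) Y :
  fb (\sum_i c i *: X i) Y = \sum_i (c i)^* * fb (X i) Y.
Proof.
rewrite /fb Wf_sum mulmx_suml tr_sum; apply: eq_bigr => j _.
by rewrite -scalemxAl mxtraceZ.
Qed.

Lemma fb_double d (c e : 'cV[C]_d) (X Y : 'I_d -> 'M[C]_n) :
  fb (\sum_i c i 0 *: X i) (\sum_j e j 0 *: Y j)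
  = (adj c *m \matrix_(i, j) fb (X i) (Y j) *m e) 0 0.
Proof.
rewrite bqfE fb_suml; apply: eq_bigr => i _.
rewrite fb_sumr big_distrr /=; apply: eq_bigr => j _.
by rewrite mxE; ring.
Qed.

Lemma fb_conj X Y : (fb X Y)^* = fb Y X.
Proof.
rewrite /fb -tr_cadj cadj_mul /Wf cadjD !cadjZ !cadj_mul cadjK rho_herm ar br.
rewrite mulmxDr -!scalemxAr raddfD /= !mxtraceZ.
rewrite mulmxDl -!scalemxAl raddfD /= !mxtraceZ.
congr (a * _ + b * _); first by rewrite mulmxA.
by rewrite mulmxA mxtrace_mulC mulmxA.
Qed.

Lemma fb_parts z : fb z z =
  a * (\sum_k (adj (col k z) *m rho *m col k z) 0 0) + b * \tr (rho *m (adj z *m z)).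
Proof.
rewrite /fb /Wf mulmxDl -!scalemxAl raddfD /= !mxtraceZ -mulmxA.
congr (a * _ + b * _); last by rewrite mulmxA.
rewrite /mxtrace; apply: eq_bigr => k _.
have := mulmx_kk (adj z) rho (adj (adj z)) k.
by rewrite cadjK mulmxA => ->; rewrite row_adj cadjK.
Qed.

Lemma fb_ge0 z : 0 <= fb z z.
Proof.
rewrite fb_parts; apply: addr_ge0; apply: mulr_ge0 => //.
- exact: ltW.
- by apply: sumr_ge0 => k _; apply: rho_psd.2.
- by apply: tr_psd_mul; [exact: rho_psd | exact: psd_adjmul].
Qed.

Lemma fb_eq0 z : fb z z = 0 -> z = 0.
Proof.
rewrite fb_parts => /eqP; rewrite paddr_eq0; first last.
- by apply: mulr_ge0 => //; apply: tr_psd_mul; [exact: rho_psd | exact: psd_adjmul].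
- by apply: mulr_ge0; [exact: ltW | apply: sumr_ge0 => k _; apply: rho_psd.2].
case/andP; rewrite mulf_eq0 (gt_eqF ha) /= => /eqP S _.
apply/matrixP => i k; rewrite mxE.
have /eqP : (adj (col k z) *m rho *m col k z) 0 0 = 0.
  by apply: (psumr_eq0P _ S) => // j _; apply: rho_psd.2.
apply: contraTeq => nz.
have : col k z != 0.
  by apply: contra nz => /eqP /matrixP /(_ i 0); rewrite !mxE => ->.
by move/(hrho.2); rewrite lt_def => /andP[].
Qed.

Section CS.
Variables (d : nat) (D Lb B : 'I_d -> 'M[C]_n).
Hypotheses (hW : forall i, Wf (Lb i) = D i) (hB : forall i, herm (B i))
  (hDB : forall i j, \tr (D i *m B j) = (i == j)%:R).

Lemma fb_LB i j : fb (Lb i) (B j) = (i == j)%:R.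
Proof. by rewrite /fb hW. Qed.

Lemma fb_BL i j : fb (B i) (Lb j) = (i == j)%:R.
Proof. by rewrite -fb_conj fb_LB rmorph_nat eq_sym. Qed.

Lemma JE : Jmat D Lb = \matrix_(i, j) fb (Lb i) (Lb j).
Proof. by apply/matrixP => i j; rewrite !mxE /fb hW. Qed.

Lemma J_herm : herm (Jmat D Lb).
Proof. by rewrite JE; apply/matrixP => i j; rewrite cadjE !mxE fb_conj. Qed.

Lemma J_unit : Jmat D Lb \in unitmx.
Proof.
rewrite -row_free_unit -kermx_eq0; apply/eqP/row_matrixP => r; rewrite row0.
set u := row r (kermx (Jmat D Lb)).
have uJ : u *m Jmat D Lb = 0 by rewrite /u -row_mul mulmx_ker row0.
set c := adj u.
set x := \sum_i c i 0 *: Lb i.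
have xL : forall j, fb x (Lb j) = 0.
  move=> j; rewrite /x fb_suml.
  transitivity ((u *m Jmat D Lb) 0 j); last by rewrite uJ mxE.
  rewrite JE mxE; apply: eq_bigr => i _; rewrite /c cadjE conjCK mxE.
  by rewrite [X in _ = _ * X]mxE.
have x0 : x = 0.
  apply: fb_eq0; rewrite {2}/x fb_sumr big1 // => j _; by rewrite xL mulr0.
apply/rowP => j; rewrite mxE.
have := fb_suml (fun i => c i 0) Lb (B j); rewrite -/x x0.
have -> : fb 0 (B j) = 0 by rewrite /fb /Wf cadj0 mul0mx mulmx0 !scaler0 addr0 mul0mx mxtrace0.
move=> /esym; rewrite (bigD1 j) //= big1 ?addr0; last first.
  by move=> i /negbTE ne; rewrite fb_LB ne mulr0.
rewrite fb_LB eqxx mulr1 /c cadjE conjCK => H; rewrite [RHS]mxE; move: H.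
by rewrite /u [X in X = 0 -> _]mxE.
Qed.

Lemma CS_psd (u : 'cV[C]_d) :
  0 <= (adj u *m (\matrix_(i, j) fb (B i) (B j) - invmx (Jmat D Lb)) *m u) 0 0.
Proof.
set J := Jmat D Lb; set K := invmx J; set Zb := \matrix_(i, j) fb (B i) (B j).
have hK : adj K = K by rewrite /K cadj_inv J_herm.
have KJ : K *m J = 1%:M by rewrite /K mulVmx // J_unit.
set w := K *m u.
set y := \sum_j u j 0 *: B j; set x := \sum_i w i 0 *: Lb i.
have aw : adj w = adj u *m K by rewrite /w cadj_mul hK.
have e1 : fb y y = (adj u *m Zb *m u) 0 0 by rewrite fb_double.
have e2 : fb x x = (adj u *m K *m u) 0 0.
  rewrite fb_double -JE -/J aw /w !mulmxA -[adj u *m K *m J]mulmxA KJ mulmx1.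
  by [].
have e3 : fb x y = (adj u *m K *m u) 0 0.
  rewrite fb_double aw.
  have -> : \matrix_(i, j) fb (Lb i) (B j) = 1%:M.
    by apply/matrixP => i j; rewrite !mxE fb_LB.
  by rewrite mulmx1.
have e4 : fb y x = (adj u *m K *m u) 0 0.
  rewrite fb_double.
  have -> : \matrix_(i, j) fb (B i) (Lb j) = 1%:M.
    by apply/matrixP => i j; rewrite !mxE fb_BL.
  by rewrite mulmx1 /w mulmxA.
have := fb_ge0 (y - x).
rewrite fb_subl !fb_subr e1 e2 e3 e4.
rewrite mulmxBr mulmxBl entryB.
by rewrite opprB addrA subrK.
Qed.

End CS.
End Gram.


Section Final.
Variable C : numClosedFieldType.

Lemma two_neq0 : (2 : C) != 0. Proof. by rewrite pnatr_eq0. Qed.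

Lemma final_ineq (beta gz gk sk sz q1 q2 eq1 eq2 eh1 eh2 a2 h2 ea2 : C) :
  0 <= beta -> beta <= 1 ->
  q1 + q2 = 2 * (gz - gk) ->
  eq1 - eq2 = 2 * beta * eh2 - 2 * eh1 ->
  eh1 = sk -> a2 = sz -> 0 <= sz ->
  0 <= q1 + eq1 -> 0 <= q2 - eq2 ->
  0 <= a2 + h2 + (- ea2 - eh2) ->
  0 <= (a2 - h2) + (ea2 - eh2) ->
  gk + sk <= gz + sz.
Proof.
move=> b0 b1 eQ eE e1 e2 sz0 T1 T2 T3 T4.
rewrite -subr_ge0.
have -> : gz + sz - (gk + sk) =
  2^-1 * ((q1 + eq1) + (q2 - eq2) + beta * (a2 + h2 + (- ea2 - eh2) + ((a2 - h2) + (ea2 - eh2))))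
  + (1 - beta) * sz.
  have eq2E : eq2 = eq1 - (2 * beta * eh2 - 2 * eh1) by rewrite -eE opprB addrC subrK.
  have q2E : q2 = 2 * (gz - gk) - q1 by rewrite -eQ addrC addKr.
  by rewrite eq2E q2E -e1 -e2; field.
apply: addr_ge0; last by apply: mulr_ge0; rewrite ?subr_ge0.
apply: mulr_ge0; first by rewrite invr_ge0 ler0n.
by apply: addr_ge0; [apply: addr_ge0 | apply: mulr_ge0 => //; apply: addr_ge0].
Qed.

Definition sgn (x : C) : C := if 0 <= x then 1 else -1.

Lemma sgn_mul x : x \is Num.real -> sgn x * x = `|x|.
Proof.
move=> rx; rewrite /sgn; case: ifP => [x0|nx0]; first by rewrite mul1r ger0_norm.
have xlt : x < 0 by rewrite real_ltNge ?real0 ?nx0.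
by rewrite ltr0_norm // mulN1r.
Qed.

Lemma sgn_p x : 0 <= 1 + sgn x.
Proof. by rewrite /sgn; case: ifP => _; rewrite ?subrr // addr_ge0 ?ler01. Qed.

Lemma sgn_m x : 0 <= 1 - sgn x.
Proof. by rewrite /sgn; case: ifP => _; rewrite ?subrr // opprK addr_ge0 ?ler01. Qed.

Lemma Im_herm1 n (M : 'M[C]_n) : herm M -> 'i *: Im_mx M = 2^-1 *: (M - M^T).
Proof.
move=> hM; apply/matrixP => i j; rewrite !mxE.
have -> : M j i = (M i j)^* by rewrite -[M in LHS]hM cadjE.
have i2 : 'i * 'i = -1 :> C by rewrite -expr2 sqrCi.
by rewrite ImE !mulrA i2; field.
Qed.

Lemma Im_adj n (M : 'M[C]_n) : herm M -> adj (Im_mx M) = - Im_mx M.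
Proof.
move=> hM; apply/matrixP => i j; rewrite cadjE !mxE.
have -> : M j i = (M i j)^* by rewrite -[M in LHS]hM cadjE.
rewrite (CrealP (Creal_Im _)) !ImE conjCK.
by field.
Qed.

End Final.


Lemma inner_id (C : numClosedFieldType) n (Z K : 'M[C]_n) (beta : C) :
  (((1 + beta) / 2) *: Z + ((1 - beta) / 2) *: Z^T - K)
  - (((1 + beta) / 2) *: Z + ((1 - beta) / 2) *: Z^T - K)^T
  = (2 * beta) *: (2^-1 *: (Z - Z^T)) - 2 *: (2^-1 *: (K - K^T)).
Proof. by apply/matrixP => i j; rewrite !mxE; field. Qed.

Lemma Xfacts (C : numClosedFieldType) n (g M : 'M[C]_n) : herm g -> herm M ->
  herm ('i *: (g *m Im_mx M *m g)) /\
  adj (g *m Im_mx M *m g) *m (g *m Im_mx M *m g)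
  = ('i *: (g *m Im_mx M *m g)) *m ('i *: (g *m Im_mx M *m g)).
Proof.
move=> hg hM; set X := g *m Im_mx M *m g.
have aX : adj X = - X by rewrite /X !cadj_mul hg Im_adj // mulNmx mulmxN mulmxA.
have i2 : 'i * 'i = -1 :> C by rewrite -expr2 sqrCi.
split; first by rewrite /herm cadjZ conjCi aX scaleNr scalerN opprK.
by rewrite aX -scalemxAl -scalemxAr scalerA i2 scaleN1r mulNmx.
Qed.

Unset Implicit Arguments.
Set Strict Implicit.

Theorem lemma5 (C : numClosedFieldType) (n d : nat)
    (rho : 'M[C]_n) (D L : 'I_d -> 'M[C]_n)
    (Hrho : posdef rho) (Htr : \tr rho = 1)
    (HDh : forall i, herm (D i)) (HDtr : forall i, \tr (D i) = 0)
    (HL : forall i, is_SLD rho (D i) (L i)) (HLind : real_lin_indep L)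
    (Hinv : exists V : 'M[C]_n -> Prop, Dinv_extension rho L V)
    (G : 'M[C]_d) (HGr : G \is a mxOver Num.real) (HG : psd G)
    (beta : C) (Hbeta : 0 <= beta <= 1)
    (Lb : 'I_d -> 'M[C]_n) (HLb : forall i, is_Lbeta beta rho (D i) (Lb i)) :
  forall B : 'I_d -> 'M[C]_n, holevo_feasible D B ->
    Cbeta G (Jmat D Lb) <= holevo_fun G rho B.
Proof.
move=> B [hBh hDB].
have /andP [b0 b1] := Hbeta.
set a : C := (1 + beta) / 2; set b : C := (1 - beta) / 2.
have ha : 0 < a.
  by rewrite /a divr_gt0 ?ltr0n // (lt_le_trans ltr01) // lerDl.
have hb : 0 <= b by rewrite /b divr_ge0 ?ler0n // subr_ge0.
have ab1 : a + b = 1 by rewrite /a /b; field.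
have hrh : herm rho := Hrho.1.
have ar' : a^* = a by apply/CrealP; apply: gtr0_real.
have br' : b^* = b by apply/CrealP; apply: ger0_real.
have hW : forall i, Wf rho a b (Lb i) = D i.
  move=> i; have := HLb i; rewrite /is_Lbeta -/a -/b => eD.
  by rewrite -[RHS](HDh i) eD /Wf cadjD !cadjZ !cadj_mul hrh ar' br'.
set J := Jmat D Lb.
have hJ : herm J := J_herm Hrho ha hb hW.
have uJ : J \in unitmx := J_unit Hrho ha hb hW hDB.
set K := invmx J.
have hK : herm K by rewrite /herm /K cadj_inv hJ.
set Z := Zmat rho B.
have hZ : herm Z.
  apply/matrixP => i j; rewrite /Z /Zmat cadjE !mxE -tr_cadj !cadj_mul hrh (hBh i) (hBh j).
  by rewrite mulmxA mxtrace_mulC mulmxA.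
have ZbE : \matrix_(i, j) fb rho a b (B i) (B j) = a *: Z + b *: Z^T.
  apply/matrixP => i j; rewrite /Z /Zmat !mxE /fb /Wf (hBh i) mulmxDl -!scalemxAl raddfD /= !mxtraceZ.
  by rewrite [X in _ = a * X + _]mxtrace_mulC mulmxA.
set Pm := a *: Z + b *: Z^T - K.
have pPm : psd Pm.
  split; first by rewrite /herm /Pm cadjB cadjD !cadjZ !cadj_tr hZ hK ar' br'.
  by move=> u; have := CS_psd Hrho ha hb hW hDB u; rewrite ZbE.
have pPmT : psd Pm^T := psd_tr pPm.
set g := psd_sqrt G.
have [pg gg] := psd_sqrt_spec HG; rewrite -/g in pg gg.
have hg : herm g := pg.1.
have GT : G^T = G.
  by have := HG.1; rewrite /herm /adj realmxC.
have trGT : forall M, \tr (G *m M^T) = \tr (G *m M).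
  by move=> M; rewrite -mxtrace_tr trmx_mul trmxK GT mxtrace_mulC.
have trg : forall M, \tr (g *m M *m g) = \tr (G *m M).
  by move=> M; rewrite mxtrace_mulC mulmxA gg.
set Q1 := g *m Pm *m g; set Q2 := g *m Pm^T *m g.
have pQ1 : psd Q1 := psd_conj pPm hg.
have pQ2 : psd Q2 := psd_conj pPmT hg.
have [hH1 XX1] := Xfacts hg hK.
have [hH2 XX2] := Xfacts hg hZ.
set X1 := g *m Im_mx K *m g in hH1 XX1 *.
set X2 := g *m Im_mx Z *m g in hH2 XX2 *.
set H1 := 'i *: X1 in hH1 XX1 *.
set H2 := 'i *: X2 in hH2 XX2 *.
have H1E : H1 = g *m (2^-1 *: (K - K^T)) *m g.
  by rewrite /H1 /X1 scalemxAl scalemxAr Im_herm1.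
have H2E : H2 = g *m (2^-1 *: (Z - Z^T)) *m g.
  by rewrite /H2 /X2 scalemxAl scalemxAr Im_herm1.
have [P1 [s1 [h11 h12 rs1 eH1]]] := herm_spec hH1.
have [P2 [s2 [h21 h22 rs2 eH2]]] := herm_spec hH2.
have tX1 := trabs_spec h11 h12 rs1 eH1 XX1.
have tX2 := trabs_spec h21 h22 rs2 eH2 XX2.
set E := sp P1 (\row_k sgn (s1 0 k)).
set A2 := sp P2 (map_mx (@Num.norm C C) s2).
have eh1 : \tr (E *m H1) = \sum_k `|s1 0 k|.
  rewrite eH1 sp_mul // sp_tr //; apply: eq_bigr => k _.
  by rewrite !mxE sgn_mul.
have a2E : \tr A2 = \sum_k `|s2 0 k|.
  by rewrite sp_tr //; apply: eq_bigr => k _; rewrite mxE.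
have pEp : psd (1%:M + E).
  rewrite -(sp_one h12) -sp_add; apply: sp_psd => k; rewrite !mxE; exact: sgn_p.
have pEm : psd (1%:M - E).
  rewrite -(sp_one h12) -sp_sub; apply: sp_psd => k; rewrite !mxE; exact: sgn_m.
have pAp : psd (A2 + H2).
  rewrite eH2 -sp_add; apply: sp_psd => k; rewrite !mxE.
  have : - s2 0 k <= `|s2 0 k| by rewrite -normrN real_ler_norm // rpredN rs2.
  by rewrite -subr_ge0 opprK addrC.
have pAm : psd (A2 - H2).
  rewrite eH2 -sp_sub; apply: sp_psd => k; rewrite !mxE.
  by have := real_ler_norm (rs2 k); rewrite -subr_ge0.
have T1 := tr_psd_mul pEp pQ1.
rewrite mulmxDl mul1mx raddfD /= in T1.
have T2 := tr_psd_mul pEm pQ2.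
rewrite mulmxBl mul1mx raddfB /= in T2.
have T3 := tr_psd_mul pEm pAp.
rewrite mulmxBl mul1mx mulmxDr raddfB /= !raddfD /= in T3.
have T4 := tr_psd_mul pEp pAm.
rewrite mulmxDl mul1mx mulmxBr raddfD /= !raddfB /= in T4.
have eQ : \tr Q1 + \tr Q2 = 2 * (\tr (G *m Z) - \tr (G *m K)).
  rewrite /Q1 /Q2 !trg trGT /Pm mulmxBr mulmxDr -!scalemxAr raddfB raddfD /= !mxtraceZ trGT.
  by rewrite -mulrDl ab1 mul1r; ring.
have QE : Q1 - Q2 = (2 * beta) *: H2 - 2 *: H1.
  rewrite /Q1 /Q2 -mulmxBl -mulmxBr /Pm /a /b inner_id -/a -/b H1E H2E.
  by rewrite mulmxBr mulmxBl -!scalemxAr -!scalemxAl.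
have eE : \tr (E *m Q1) - \tr (E *m Q2) = 2 * beta * \tr (E *m H2) - 2 * \tr (E *m H1).
  by rewrite -raddfB /= -mulmxBr QE mulmxBr -!scalemxAr raddfB /= !mxtraceZ mulrA.
have sz0 : 0 <= \sum_k `|s2 0 k| by apply: sumr_ge0 => k _; exact: normr_ge0.
rewrite /Cbeta /holevo_fun -/g -/J -/K -/Z -/X1 -/X2 tX1 tX2.
exact: (final_ineq b0 b1 eQ eE eh1 a2E sz0 T1 T2 T3 T4).
Qed.
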